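(* Let $x'=f(x)$, $x\in\mathbb R^d_{>0}$, be the deterministic system of a reaction network with species $X_1,\dots,X_d$, and let $\theta,\mu>0$ be such that there exists a positive steady state $x^*$ with $x^*_1=\mu/\theta$. Suppose: (1) the system admits $k$ linearly independent conservation relations $u^i\cdot x(t)=M_i$ ($i=1,\dots,k$) with $u^i\in\mathbb R^d_{>0}$, written after reordering of coordinates as $[U\,|\,I]x=M$ with $U$ a $k\times\bar d$ matrix, $\bar d=d-k$, $I$ the $k\times k$ identity, and with $u^1_1\ne 0$; (2) all eigenvalues of $J(x^* )$ have strictly negative real parts; (3) $H_2(0)>0$ if $\bar d$ is odd and $H_2(0)<0$ if $\bar d$ is even. Then, for sufficiently small $\theta$ and $\mu$ and sufficiently large initial value $z(0)$ of the control species, all eigenvalues of $\bar J(x^*,z^* )$ have strictly negative real parts; that is, the positive steady state $(x^*,z^* )$ of the union system of the given system and the basic ACR system $X_1+Z\xrightarrow{\theta}2Z$, $Z\xrightarrow{\mu}X_1$ is linearly stable.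
   Context: Reduced system of the original network: using the conservation relations, $x_{\bar d+j}=M_j-\sum_{i=1}^{\bar d}u^j_ix_i$ for $j=1,\dots,k$, and $g_i(x_1,\dots,x_{\bar d})=f_i(x_1,\dots,x_{\bar d},M_1-\sum_i u^1_ix_i,\dots,M_k-\sum_i u^k_ix_i)$ for $i=1,\dots,\bar d$; $J(x^* )$ denotes the Jacobian of $(g_1,\dots,g_{\bar d})$ at $(x^*_1,\dots,x^*_{\bar d})$. Union (controlled) system: $x_1'=f_1(x)-z(\theta x_1-\mu)$, $z'=z(\theta x_1-\mu)$, $x_i'=f_i(x)$ for $i\ge 2$ (mass-action kinetics for the controller). Its conservation relations are $u^i\cdot x+u^i_1z=\bar M_i$, so it reduces to variables $(x_1,\dots,x_{\bar d},z)$ via $x_{\bar d+j}=\bar M_j-\sum_{i=1}^{\bar d}u^j_ix_i-u^j_1z$, giving functions $h_1,\dots,h_{\bar d}$ (obtained from $f_1-z(\theta x_1-\mu),f_2,\dots,f_{\bar d}$ by this substitution) and $h_{\bar d+1}=z(\theta x_1-\mu)$. $(x^*,z^* )$ is a positive steady state of the union system with this $x^*$ ($x^*_1=\mu/\theta$) and $z^*>0$ determined by the conservation relations and the initial data. $\bar J(x^*,z^* )$ is the Jacobian of $(h_1,\dots,h_{\bar d+1})$ in the variables $(x_1,\dots,x_{\bar d},z)$ at $(x^*,z^* )$. $H_2(\lambda)$ is the determinant of the $\bar d\times\bar d$ matrix obtained from $\lambda I-\bar J(x^*,z^* )$ by deleting its last row and its first column; explicitly its rows $i=1,\dots,\bar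 d$ are $(\lambda\delta_{i2}-\partial_2g_i(x^* ),\dots,\lambda\delta_{i\bar d}-\partial_{\bar d}g_i(x^* ),-\partial_zh_i(x^*,z^* ))$. *)

(* Defs.v *)
From HB Require Import structures.
From mathcomp Require Import all_boot all_order all_algebra.
From mathcomp Require Import all_classical all_reals all_analysis.
From mathcomp Require Import complex.
Set Implicit Arguments. Unset Strict Implicit. Unset Printing Implicit Defensive.
Import Order.TTheory GRing.Theory Num.Theory.
Import numFieldNormedType.Exports.
Local Open Scope ring_scope.

(* Indexing conventions.
   dbar = n.+1 (reduced species X_1..X_dbar), k = m.+1 conservation relations,
   d = n.+1 + m.+1 species.  A state is a row vector x : 'rV[R]_(n.+1 + m.+1);
   species X_i (i <= dbar) is x 0 (lshift _ i), species X_{dbar+j} is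
   x 0 (rshift _ j).  U : 'M_(m.+1, n.+1), U j i = u^j_i, so the conservation
   relations read  [U | I] x = M, i.e. lsubmx x *m U^T + rsubmx x = M.
   Species X_1 is index ord0 of 'I_(n.+1); u^1_1 = U 0 0. *)

Definition dpart (R : realType) (p : nat) (F : 'rV[R]_p -> R)
    (a : 'rV[R]_p) (l : 'I_p) : R :=
  derive F a (delta_mx 0 l).

Definition consM (R : realType) (n m : nat) (U : 'M[R]_(m.+1, n.+1))
    (x : 'rV[R]_(n.+1 + m.+1)) : 'rV[R]_(m.+1) :=
  lsubmx x *m U^T + rsubmx x.

Definition liftx (R : realType) (n m : nat) (U : 'M[R]_(m.+1, n.+1))
    (M : 'rV[R]_(m.+1)) (y : 'rV[R]_(n.+1)) : 'rV[R]_(n.+1 + m.+1) :=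
  row_mx y (M - y *m U^T).

Definition gfun (R : realType) (n m : nat)
    (f : 'rV[R]_(n.+1 + m.+1) -> 'rV[R]_(n.+1 + m.+1))
    (U : 'M[R]_(m.+1, n.+1)) (M : 'rV[R]_(m.+1)) (i : 'I_(n.+1))
    (y : 'rV[R]_(n.+1)) : R :=
  f (liftx U M y) 0 (lshift m.+1 i).

Definition Jred (R : realType) (n m : nat)
    (f : 'rV[R]_(n.+1 + m.+1) -> 'rV[R]_(n.+1 + m.+1))
    (U : 'M[R]_(m.+1, n.+1)) (xs : 'rV[R]_(n.+1 + m.+1)) : 'M[R]_(n.+1) :=
  \matrix_(i, l) dpart (gfun f U (consM U xs) i) (lsubmx xs) l.

(* Union system, reduced variables w = (x_1, ..., x_dbar, z) : 'rV_(n.+2). *)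
Definition yof (R : realType) (n : nat) (w : 'rV[R]_(n.+2)) : 'rV[R]_(n.+1) :=
  \row_(i < n.+1) w 0 (widen_ord (leqnSn n.+1) i).
Definition zof (R : realType) (n : nat) (w : 'rV[R]_(n.+2)) : R := w 0 ord_max.

Definition u1 (R : realType) (n m : nat) (U : 'M[R]_(m.+1, n.+1)) : 'rV[R]_(m.+1) :=
  \row_j U j 0.

Definition liftxz (R : realType) (n m : nat) (U : 'M[R]_(m.+1, n.+1))
    (Mb : 'rV[R]_(m.+1)) (w : 'rV[R]_(n.+2)) : 'rV[R]_(n.+1 + m.+1) :=
  row_mx (yof w) (Mb - yof w *m U^T - zof w *: u1 U).

Definition hfun (R : realType) (n m : nat)
    (f : 'rV[R]_(n.+1 + m.+1) -> 'rV[R]_(n.+1 + m.+1))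
    (U : 'M[R]_(m.+1, n.+1)) (theta mu : R) (Mb : 'rV[R]_(m.+1))
    (i : 'I_(n.+2)) (w : 'rV[R]_(n.+2)) : R :=
  match unlift ord_max i with
  | Some i' => f (liftxz U Mb w) 0 (lshift m.+1 i')
               - (i' == ord0)%:R * (zof w * (theta * yof w 0 ord0 - mu))
  | None => zof w * (theta * yof w 0 ord0 - mu)
  end.

Definition consMbar (R : realType) (n m : nat) (U : 'M[R]_(m.+1, n.+1))
    (xs : 'rV[R]_(n.+1 + m.+1)) (zs : R) : 'rV[R]_(m.+1) :=
  consM U xs + zs *: u1 U.

Definition wstar (R : realType) (n m : nat) (xs : 'rV[R]_(n.+1 + m.+1)) (zs : R)
    : 'rV[R]_(n.+2) :=
  \row_(i < n.+2) match unlift ord_max i with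
                  | Some i' => xs 0 (lshift m.+1 i')
                  | None => zs end.

Definition Jbar (R : realType) (n m : nat)
    (f : 'rV[R]_(n.+1 + m.+1) -> 'rV[R]_(n.+1 + m.+1))
    (U : 'M[R]_(m.+1, n.+1)) (theta mu : R)
    (xs : 'rV[R]_(n.+1 + m.+1)) (zs : R) : 'M[R]_(n.+2) :=
  \matrix_(i, l) dpart (hfun f U theta mu (consMbar U xs zs) i) (wstar xs zs) l.

Definition H2at0 (R : realType) (n m : nat)
    (f : 'rV[R]_(n.+1 + m.+1) -> 'rV[R]_(n.+1 + m.+1))
    (U : 'M[R]_(m.+1, n.+1)) (theta mu : R)
    (xs : 'rV[R]_(n.+1 + m.+1)) (zs : R) : R :=
  \det (row' ord_max (col' ord0 ((0 : R)%:M - Jbar f U theta mu xs zs))).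

Definition all_eig_neg_re (R : realType) (p : nat) (A : 'M[R]_p) : Prop :=
  forall lam : R[i], eigenvalue (map_mx (real_complex R) A) lam -> Re lam < 0.

(* Main.v *)
Require Import Defs.
From HB Require Import structures.
From mathcomp Require Import all_boot all_order all_algebra.
From mathcomp Require Import all_classical all_reals all_analysis.
From mathcomp Require Import complex.
From mathcomp Require Import polyrcf.
From mathcomp.algebra_tactics Require Import ring lra.
Set Implicit Arguments. Unset Strict Implicit. Unset Printing Implicit Defensive.
Import Order.TTheory GRing.Theory Num.Theory.
Import numFieldNormedType.Exports.
Local Open Scope classical_set_scope.
Local Open Scope complex_scope.
Local Open Scope ring_scope.
Lemma eval_char_poly_mx (R : comNzRingType) n (A : 'M[R]_n) (x : R) :
  map_mx (horner_eval x) (char_poly_mx A) = x%:M - A.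
Proof.
apply/matrixP => i j; rewrite !mxE /horner_eval.
by rewrite hornerD hornerN hornerMn hornerX hornerC.
Qed.

Lemma horner_char_poly' (R : comNzRingType) n (A : 'M[R]_n) (x : R) :
  (char_poly A).[x] = \det (x%:M - A).
Proof.
by rewrite -eval_char_poly_mx det_map_mx.
Qed.
Lemma unliftmaxK N (i : 'I_N.+1) : unlift (@ord_max N.+1) (lift ord_max i) = Some i.
Proof. exact: liftK. Qed.

Definition Jb (R : pzRingType) N (A : 'M[R]_N.+1) (c : 'cV[R]_N.+1) (e : R)
  : 'M[R]_N.+2 :=
 \matrix_(i, l) match unlift ord_max i, unlift ord_max l with
 | Some i', Some l' => A i' l' - ((i' == ord0) && (l' == ord0))%:R * e
 | Some i', None => c i' ord0
 | None, Some l' => (l' == ord0)%:R * e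
 | None, None => 0 end.

Lemma H_eq (R : comNzRingType) N (A : 'M[R]_N.+1) (c : 'cV[R]_N.+1) (e : R) :
  \det (row' ord_max (col' ord0 ((0:R)%:M - Jb A c e))) =
  - (-1)^+N * \sum_j \adj (-A) ord0 j * c j ord0.
Proof.
set H := row' _ _.
have HX : col' ord_max H = col' ord0 (-A).
  apply/matrixP => i j; rewrite !mxE.
  have -> : lift ord0 (lift ord_max j) = lift ord_max (lift ord0 j) :> 'I_N.+2.
    apply/val_inj; rewrite /= /bump /=; have := ltn_ord j.
    move=> Hj; rewrite (leqNgt N j) Hj /= add0n.
    by have -> : (N < 1 + j)%N = false by apply/negbTE; rewrite -leqNgt add1n.
  rewrite !unliftmaxK mul0rn sub0r; congr (- _).
  have -> : (lift ord0 j == ord0) = false by rewrite eq_sym (negbTE (neq_lift _ _)).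
  by rewrite andbF mul0r subr0.
have Hlast : forall i, H i ord_max = - c i ord0.
  move=> i; rewrite !mxE.
  have -> : lift ord0 (ord_max : 'I_N.+1) = ord_max :> 'I_N.+2 by apply/val_inj.
  rewrite unliftmaxK.
  case: unliftP => [j /(congr1 val) /= /eqP|_]; last by rewrite mul0rn sub0r.
  by rewrite /bump leqNgt ltn_ord /= add0n (gtn_eqF (ltn_ord j)).
rewrite (expand_det_col H ord_max) mulr_sumr; apply: eq_bigr => i _.
rewrite Hlast /cofactor HX mxE /cofactor /= exprD addn0.
ring.
Qed.


Lemma widen_lift_max N (i : 'I_N.+1) : widen_ord (leqnSn N.+1) i = lift ord_max i.
Proof. by apply/val_inj; rewrite /= /bump leqNgt ltn_ord. Qed.

Lemma unliftmaxN N : unlift (@ord_max N.+1) ord_max = None.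
Proof.
case: unliftP => // j /(congr1 val); rewrite /= /bump leqNgt ltn_ord /= add0n.
by move=> H; have := ltn_ord j; rewrite -H ltnn.
Qed.

Lemma sum_split_max (F : nzRingType) N (g : 'I_N.+2 -> F) :
  \sum_i g i = \sum_(i < N.+1) g (lift ord_max i) + g ord_max.
Proof. by rewrite big_ord_recr /=; congr (_ + _); apply: eq_bigr => i _; rewrite widen_lift_max. Qed.

Lemma eig_rel (F : fieldType) N (A : 'M[F]_N.+1) c e lam (v : 'rV[F]_N.+2) :
 v *m Jb A c e = lam *: v -> v != 0 -> \det (lam%:M - A) != 0 ->
 lam * \det (lam%:M - A) = e * (\sum_j \adj (lam%:M - A) ord0 j * c j ord0
                              - lam * \adj (lam%:M - A) ord0 ord0).
Proof.
move=> Hv v0 D0.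
set u : 'rV[F]_N.+1 := \row_j v 0 (lift ord_max j).
set s := v 0 ord_max.
have E1 : u *m (lam%:M - A) = (e * (s - u 0 ord0)) *: delta_mx 0 ord0.
  apply/rowP => l; have := congr1 (fun M : 'rV[F]_N.+2 => M 0 (lift ord_max l)) Hv.
  rewrite /= !mxE sum_split_max !mxE unliftmaxK unliftmaxN => H.
  move: H; under eq_bigr do rewrite !mxE unliftmaxK.
  rewrite (eq_bigr (fun i => v 0 (lift ord_max i) * A i l -
       ((i == ord0) && (l == ord0))%:R * e * v 0 (lift ord_max i))); last first.
    by move=> i _; rewrite unliftmaxK; ring.
  have S1 : \sum_i ((i == ord0) && (l == ord0))%:R * e * v 0 (lift ord_max i)
      = (l == ord0)%:R * e * v 0 (lift ord_max ord0).
    rewrite (bigD1 ord0) //= big1 ?addr0 // => i /negbTE ->; by rewrite !mul0r.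
  rewrite sumrB S1 => H.
  have S2 : \sum_j u 0 j * (lam%:M - A) j l = lam * u 0 l - \sum_j u 0 j * A j l.
    rewrite (eq_bigr (fun j => lam * (u 0 j * (j == l)%:R) - u 0 j * A j l)); last first.
      by move=> j _; rewrite !mxE -mulr_natr; ring.
    rewrite sumrB -mulr_sumr (bigD1 l) //= big1 ?addr0 ?eqxx ?mulr1 // => j /negbTE ->.
    by rewrite mulr0.
  rewrite S2.
  have -> : \sum_i u 0 i * A i l = \sum_i v 0 (lift ord_max i) * A i l.
    by apply: eq_bigr => i _; rewrite mxE.
  rewrite /s mxE /=; move: H; case: (l == ord0) => /= H.
    apply/eqP; rewrite -subr_eq0; apply/eqP; rewrite -{1}H; ring.
  apply/eqP; rewrite -subr_eq0; apply/eqP; rewrite -{1}H; ring.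
have E2 : \sum_i u 0 i * c i ord0 = lam * s.
  have := congr1 (fun M : 'rV[F]_N.+2 => M 0 ord_max) Hv.
  rewrite /= !mxE sum_split_max !mxE unliftmaxN mulr0 addr0 => <-.
  by apply: eq_bigr => i _; rewrite !mxE unliftmaxK unliftmaxN.
set t := e * (s - u 0 ord0).
have Ej : forall j, \det (lam%:M - A) * u 0 j = t * \adj (lam%:M - A) ord0 j.
  move=> j; have := congr1 (fun M : 'rV[F]_N.+1 => M *m \adj (lam%:M - A)) E1.
  rewrite -mulmxA mul_mx_adj mul_mx_scalar -scalemxAl -rowE => /rowP /(_ j).
  by rewrite /t !mxE => H; exact: H.
have K1 : \det (lam%:M - A) * (lam * s) = t * \sum_j \adj (lam%:M - A) ord0 j * c j ord0.
  rewrite -E2 !mulr_sumr; apply: eq_bigr => j _.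
  by rewrite [LHS]mulrA Ej mulrA.
have K2 : \det (lam%:M - A) * (lam * u 0 ord0) = t * (lam * \adj (lam%:M - A) ord0 ord0).
  by rewrite [LHS]mulrCA Ej; ring.
have [Hs|Hs] := eqVneq s (u 0 ord0).
  exfalso; move/negP: v0; apply; apply/eqP.
  have u0 : forall j, u 0 j = 0.
    move=> j; have := Ej j; rewrite /t Hs subrr mulr0 mul0r => /eqP.
    by rewrite mulf_eq0 (negbTE D0) /= => /eqP.
  apply/rowP => k; rewrite mxE; case: (unliftP ord_max k) => [j ->|->].
    by have := u0 j; rewrite mxE.
  by rewrite -/s Hs u0.
have Hs' : s - u 0 ord0 != 0 by rewrite subr_eq0.
apply: (mulIf Hs').
rewrite (_ : lam * \det (lam%:M - A) * (s - u 0 ord0) =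
   \det (lam%:M - A) * (lam * s) - \det (lam%:M - A) * (lam * u 0 ord0)); last by ring.
rewrite K1 K2 /t; ring.
Qed.


Notation nc := Normc.normc.

Lemma normC_nc (R : rcfType) (z : R[i]) : `|z| = (nc z)%:C.
Proof. by case: z. Qed.

Lemma nc_ge0 (R : rcfType) (z : R[i]) : 0 <= nc z.
Proof. by case: z => a b; rewrite /= sqrtr_ge0. Qed.

Lemma ncM (R : rcfType) (z w : R[i]) : nc (z * w) = nc z * nc w.
Proof. exact: Normc.normcM. Qed.

Lemma ncD (R : rcfType) (z w : R[i]) : nc (z + w) <= nc z + nc w.
Proof. exact: le_normcD. Qed.

Lemma ncN (R : rcfType) (z : R[i]) : nc (- z) = nc z.
Proof. exact: normcN. Qed.

Lemma ncB (R : rcfType) (z w : R[i]) : nc (z - w) <= nc z + nc w.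
Proof. by rewrite -(ncN w) ncD. Qed.

Lemma ncX (R : rcfType) (z : R[i]) k : nc (z ^+ k) = nc z ^+ k.
Proof.
elim: k => [|k IH]; first by rewrite !expr0 Normc.normc1.
by rewrite !exprS ncM IH.
Qed.

Lemma ncR (R : rcfType) (x : R) : nc (x%:C) = `|x|.
Proof. by rewrite /= expr0n /= addr0 sqrtr_sqr. Qed.

Lemma Re_le_nc (R : rcfType) (z : R[i]) : `|complex.Re z| <= nc z.
Proof. by have := normc_ge_Re z; rewrite normC_nc lecR. Qed.

Lemma nc_eq0 (R : rcfType) (z : R[i]) : (nc z == 0) = (z == 0).
Proof.
apply/eqP/eqP => [|->]; first exact: Normc.eq0_normc.
exact: Normc.normc0.
Qed.

Lemma nc_sum (R : rcfType) (I : Type) (r : seq I) (F : I -> R[i]) :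
  nc (\sum_(i <- r) F i) <= \sum_(i <- r) nc (F i).
Proof.
elim: r => [|a r IH]; first by rewrite !big_nil Normc.normc0.
rewrite !big_cons; apply: le_trans (ncD _ _) _; exact: lerD.
Qed.

Lemma ReB (R : rcfType) (z w : R[i]) : complex.Re (z - w) = complex.Re z - complex.Re w.
Proof. by case: z; case: w. Qed.

Lemma ReM_real (R : rcfType) (z : R[i]) (a : R) : complex.Re (z * a%:C) = complex.Re z * a.
Proof. by case: z => x y /=; rewrite mulr0 subr0. Qed.

Lemma poly_bound (R : rcfType) (p : {poly R[i]}) (x : R[i]) (K : R) :
  nc x <= K ->
  nc p.[x] <= \sum_(i < size p) nc p`_i * K ^+ i.
Proof.
move=> HK; rewrite horner_coef; apply: le_trans; first exact: nc_sum.
apply: ler_sum => i _; rewrite ncM ncX; apply: ler_wpM2l; first exact: nc_ge0.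
by apply: lerXn2r; rewrite ?nnegrE ?nc_ge0 //; apply: le_trans HK; exact: nc_ge0.
Qed.

Lemma poly_bound0 (R : rcfType) (p : {poly R[i]}) (x : R[i]) :
  nc x <= 1 ->
  nc (p.[x] - p.[0]) <= nc x * \sum_(i < size p) nc p`_i.
Proof.
move=> H1; rewrite !horner_coef -sumrB mulr_sumr.
apply: le_trans; first exact: nc_sum.
apply: ler_sum => i _.
have -> : p`_i * x ^+ i - p`_i * 0 ^+ i = p`_i * (x ^+ i - 0 ^+ i) by ring.
rewrite ncM mulrC; apply: ler_wpM2r; first exact: nc_ge0.
case: (nat_of_ord i) => [|k]; first by rewrite !expr0 subrr Normc.normc0 nc_ge0.
rewrite expr0n /= subr0 ncX.
have h0 := nc_ge0 x.
elim: k => [|k IH]; first by rewrite expr1.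
by rewrite exprS; apply: le_trans IH; rewrite ler_piMl // exprn_ge0.
Qed.


Lemma gersh (R : rcfType) n (M : 'M[R[i]]_n) (v : 'rV[R[i]]_n) lam :
  v *m M = lam *: v -> v != 0 ->
  nc lam <= \sum_i \sum_j nc (M i j).
Proof.
move=> Hv v0.
set S := \sum_j nc (v 0 j).
have S0 : 0 < S.
  have [k vk] : exists k, v 0 k != 0.
    apply/existsP; apply: contraR v0 => /existsPn H; apply/eqP/rowP => k.
    by rewrite mxE; move: (H k); rewrite negbK => /eqP.
  rewrite /S (bigD1 k) //=.
  have h1 : 0 <= \sum_(i < n | i != k) nc (v 0 i) by apply: sumr_ge0 => i _; exact: nc_ge0.
  have h2 : 0 < nc (v 0 k) by rewrite lt0r nc_ge0 nc_eq0 vk.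
  lra.
have E : nc lam * S <= \sum_i nc (v 0 i) * \sum_j nc (M i j).
  rewrite /S mulr_sumr.
  apply: (@le_trans _ _ (\sum_j \sum_i nc (v 0 i) * nc (M i j))); last first.
    by rewrite exchange_big /=; apply: ler_sum => i _; rewrite mulr_sumr.
  apply: ler_sum => j _.
  rewrite -ncM; have -> : lam * v 0 j = (v *m M) 0 j by rewrite Hv mxE.
  rewrite mxE; apply: le_trans; first exact: nc_sum.
  by apply: ler_sum => i _; rewrite ncM.
have E2 : \sum_i nc (v 0 i) * \sum_j nc (M i j) <= S * \sum_i \sum_j nc (M i j).
  rewrite /S mulr_suml; apply: ler_sum => i _; apply: ler_wpM2l; first exact: nc_ge0.
  rewrite [X in _ <= X](bigD1 i) //=.
  suff : 0 <= \sum_(i0 < n | i0 != i) \sum_j nc (M i0 j) by lra.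
  by apply: sumr_ge0 => k _; apply: sumr_ge0 => j _; exact: nc_ge0.
have := le_trans E E2; rewrite mulrC ler_pM2l //.
Qed.

Lemma eig_re_neg_char_pos (R : rcfType) n (A : 'M[R]_n) :
  (forall lam : R[i], eigenvalue (map_mx (real_complex R) A) lam -> Re lam < 0) ->
  0 < (char_poly A).[0].
Proof.
move=> H.
have NR : {in `[0, +oo[, forall t : R, ~~ root (char_poly A) t}.
  move=> t; rewrite in_itv /= andbT => t0; apply/negP => rt.
  have : eigenvalue (map_mx (real_complex R) A) t%:C.
    by rewrite eigenvalue_root_char -map_char_poly rmorph_root.
  by move/H; rewrite -complexRe ltcR /= ltNge t0.
have := sgp_pinftyP NR (_ : (0:R) \in `[0, +oo[); rewrite in_itv /= lexx => /(_ isT).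
rewrite /sgp_pinfty (monicP (char_poly_monic A)) sgr1.
by move/eqP; rewrite sgr_cp0.
Qed.


Lemma nc_prod (R : rcfType) (I : Type) (r : seq I) (F : I -> R[i]) :
  nc (\prod_(i <- r) F i) = \prod_(i <- r) nc (F i).
Proof.
elim: r => [|a r IH]; first by rewrite !big_nil Normc.normc1.
by rewrite !big_cons ncM IH.
Qed.

Lemma char_lower (R : rcfType) n (B : 'M[R[i]]_n) :
  (forall lam, eigenvalue B lam -> complex.Re lam < 0) ->
  exists2 d : R, 0 < d & forall lam, 0 <= complex.Re lam -> d <= nc (char_poly B).[lam].
Proof.
move=> H.
have [rs Hrs] := closed_field_poly_normal (char_poly B).
rewrite (monicP (char_poly_monic B)) scale1r in Hrs.
have Hr : forall z, z \in rs -> complex.Re z < 0.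
  move=> z zr; apply: H; rewrite eigenvalue_root_char Hrs.
  by rewrite root_prod_XsubC.
exists (\prod_(z <- rs) (- complex.Re z)).
  rewrite big_seq; apply: prodr_gt0 => z zr; rewrite oppr_gt0; exact: Hr.
move=> lam lam0; rewrite Hrs horner_prod nc_prod.
rewrite big_seq [X in _ <= X]big_seq; apply: ler_prod => z zr.
have := Hr z zr; have := Re_le_nc (lam - z); rewrite hornerXsubC ReB.
move=> h1 h2; apply/andP; split; first lra.
have := ler_norm (complex.Re lam - complex.Re z); lra.
Qed.

Lemma map_Jb (R : rcfType) N (A : 'M[R]_N.+1) (c : 'cV[R]_N.+1) (e : R) :
  map_mx (real_complex R) (Jb A c e) =
  Jb (map_mx (real_complex R) A) (map_mx (real_complex R) c) (e%:C).
Proof.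
apply/matrixP => i j; rewrite !mxE.
case: unlift => [i'|]; case: unlift => [j'|] //=; rewrite ?mxE ?rmorphB ?rmorphM ?rmorph_nat //.
Qed.

Lemma Jb_bound (R : rcfType) N (A : 'M[R]_N.+1) (c : 'cV[R]_N.+1) (e : R) i j :
  0 <= e <= 1 -> `|Jb A c e i j| <= `|Jb A c 0 i j| + 1.
Proof.
move=> /andP[e0 e1]; rewrite !mxE.
case: unlift => [i'|]; case: unlift => [j'|] //=; rewrite ?mulr0 ?subr0 ?normr0.
- case: (_ && _) => /=; rewrite ?mul1r ?mul0r ?subr0; last lra.
  have := ler_normB (A i' j') e; rewrite (ger0_norm e0); lra.
- lra.
- case: (_ == _) => /=; rewrite ?mul1r ?mul0r ?normr0; last lra.
  rewrite (ger0_norm e0); lra.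
- lra.
Qed.

Lemma adj_eval (F : fieldType) n (B : 'M[F]_n) (x : F) i j :
  (\adj (char_poly_mx B) i j).[x] = \adj (x%:M - B) i j.
Proof.
rewrite -eval_char_poly_mx -map_mx_adj [RHS]mxE.
by [].
Qed.


Local Notation toC := (real_complex _).

Lemma ReN_lt0 (R: rcfType) (z : R[i]) : (Re z < 0) = (complex.Re z < 0).
Proof. by rewrite -complexRe -ltcR. Qed.

Lemma core (R : rcfType) N (A : 'M[R]_N.+1) (c : 'cV[R]_N.+1) :
  (forall lam : R[i], eigenvalue (map_mx (real_complex R) A) lam -> Re lam < 0) ->
  exists e0 : R, 0 < e0 /\ forall e, 0 < e -> e < e0 ->
    (if odd N.+1 then 0 < \det (row' ord_max (col' ord0 ((0:R)%:M - Jb A c e)))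
     else \det (row' ord_max (col' ord0 ((0:R)%:M - Jb A c e))) < 0) ->
    forall lam : R[i], eigenvalue (map_mx (real_complex R) (Jb A c e)) lam -> Re lam < 0.
Proof.
move=> HA.
set Ac := map_mx toC A; set cc := map_mx toC c.
have HA' : forall lam, eigenvalue Ac lam -> complex.Re lam < 0.
  by move=> lam /HA; rewrite ReN_lt0.
have [d d0 Hd] := char_lower HA'.
set P := char_poly Ac.
have p0pos := eig_re_neg_char_pos HA.
set p0 := (char_poly A).[0] in p0pos.
have P0 : P.[0] = p0%:C.
  by rewrite /P /Ac -map_char_poly -(rmorph0 toC) horner_map.
set Adp := \adj (char_poly_mx Ac).
set Sp := \sum_j Adp ord0 j * (cc j ord0)%:P - 'X * Adp ord0 ord0.
have SpE : forall x, Sp.[x] = \sum_j \adj (x%:M - Ac) ord0 j * cc j ord0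
                              - x * \adj (x%:M - Ac) ord0 ord0.
  move=> x; rewrite /Sp hornerD hornerN hornerM hornerX horner_sum adj_eval.
  by congr (_ - _); apply: eq_bigr => j _; rewrite hornerM hornerC adj_eval.
set r0 := \sum_j \adj (- A) ord0 j * c j ord0.
have S0 : Sp.[0] = r0%:C.
  rewrite SpE mul0r subr0 /r0 rmorph_sum; apply: eq_bigr => j _.
  have -> : (0 : R[i])%:M - Ac = map_mx toC (- A).
    by apply/matrixP => i k; rewrite /Ac !mxE mul0rn sub0r rmorphN.
  by rewrite -map_mx_adj rmorphM !mxE.
have HH : forall e : R, \det (row' ord_max (col' ord0 ((0:R)%:M - Jb A c e))) = - (-1)^+N * r0.
  by move=> e; rewrite H_eq.
have [r0neg|r0nn] := ltP r0 0; last first.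
  exists 1; split => // e _ _; rewrite HH -signr_odd /=.
  by case: (odd N) => /=; rewrite ?expr0 ?expr1; lra.
set T0 := \sum_i \sum_j (`|Jb A c 0 i j| + 1).
have T0ge : 0 <= T0.
  by apply: sumr_ge0 => i _; apply: sumr_ge0 => j _; have := normr_ge0 (Jb A c 0 i j); lra.
set CS := \sum_(i < size Sp) nc Sp`_i * T0 ^+ i.
have CSge : 0 <= CS.
  by apply: sumr_ge0 => i _; apply: mulr_ge0; [exact: nc_ge0 | exact: exprn_ge0].
set K := CS / d.
have Kge : 0 <= K by apply: divr_ge0 => //; lra.
set CP1 := \sum_(i < size P) nc P`_i.
set CS1 := \sum_(i < size Sp) nc Sp`_i.
have CP1ge : 0 <= CP1 by apply: sumr_ge0 => i _; exact: nc_ge0.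
have CS1ge : 0 <= CS1 by apply: sumr_ge0 => i _; exact: nc_ge0.
set Dd := K ^+ 2 * CP1 + K * CS1.
have Ddge : 0 <= Dd by rewrite /Dd; nra.
set Q := 1 + K + Dd / (- r0).
have Qge : 1 <= Q.
  have : 0 <= Dd / (- r0) by apply: divr_ge0 => //; lra.
  rewrite /Q; lra.
exists (1 / Q); split; first by apply: divr_gt0 => //; lra.
move=> e e0 eQ _ lam.
have eQ1 : e * Q < 1 by rewrite -ltr_pdivlMr //; lra.
have e1 : e < 1.
  have : 0 <= e * (K + Dd / (- r0)).
    apply: mulr_ge0; first lra. by apply: addr_ge0 => //; apply: divr_ge0 => //; lra.
  rewrite /Q in eQ1; nra.
have eK : e * K <= 1.
  have : 0 <= e * (Dd / (- r0)) by apply: mulr_ge0; [lra | apply: divr_ge0 => //; lra].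
  rewrite /Q in eQ1; nra.
have eDd : e * Dd < - r0.
  have h : e * (Dd / (- r0)) < 1.
    have : 0 <= e * (1 + K) by apply: mulr_ge0; lra.
    rewrite /Q in eQ1; nra.
  move: h; rewrite mulrA ltr_pdivrMr; lra.
move=> Heig; rewrite ReN_lt0 ltNge; apply/negP => Hre; move: Heig.
move/eigenvalueP => [v Hv v0].
have Hlam : nc lam <= T0.
  apply: le_trans (gersh Hv v0) _.
  apply: ler_sum => i _; apply: ler_sum => j _.
  rewrite mxE ncR; apply: Jb_bound; lra.
rewrite map_Jb in Hv.
have Dlam := Hd lam Hre.
have Dne : \det (lam%:M - Ac) != 0.
  rewrite -horner_char_poly' -/P; apply/negP => /eqP h.
  by move: Dlam; rewrite h Normc.normc0; lra.
have Rel := eig_rel Hv v0 Dne.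
rewrite -horner_char_poly' -/P -/cc -SpE in Rel.
have Hb1 : nc lam * d <= e * CS.
  have := poly_bound Sp Hlam; rewrite -/CS => hS.
  have : nc (lam * P.[lam]) = e * nc Sp.[lam].
    by rewrite Rel ncM ncR ger0_norm //; lra.
  rewrite ncM => h.
  apply: le_trans (_ : nc lam * nc P.[lam] <= _).
    by apply: ler_wpM2l => //; exact: nc_ge0.
  by rewrite h; apply: ler_wpM2l => //; lra.
have Hlk : nc lam <= e * K.
  rewrite /K mulrA ler_pdivlMr //.
have Hl1 : nc lam <= 1 by lra.
have BP := poly_bound0 P Hl1; rewrite -/CP1 in BP.
have BS := poly_bound0 Sp Hl1; rewrite -/CS1 in BS.
have Iden : lam * P.[0] - e%:C * Sp.[0] =
    lam * (- (P.[lam] - P.[0])) + e%:C * (Sp.[lam] - Sp.[0]).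
  have h : (lam * P.[0] - e%:C * Sp.[0]) - (lam * (- (P.[lam] - P.[0])) +
     e%:C * (Sp.[lam] - Sp.[0])) = lam * P.[lam] - e%:C * Sp.[lam] by ring.
  by apply/eqP; rewrite -subr_eq0 h Rel subrr.
have Hn : nc (lam * P.[0] - e%:C * Sp.[0]) <= e ^+ 2 * Dd.
  rewrite Iden; apply: le_trans (ncD _ _) _.
  rewrite !ncM ncN ncR ger0_norm; last lra.
  have h0 := nc_ge0 lam.
  have h1 := nc_ge0 (P.[lam] - P.[0]).
  have h2 := nc_ge0 (Sp.[lam] - Sp.[0]).
  set a := nc lam in Hlk Hl1 BP BS h0 *.
  set bP := nc (P.[lam] - P.[0]) in BP h1 *.
  set bS := nc (Sp.[lam] - Sp.[0]) in BS h2 *.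
  have t1 : a * bP <= a * (a * CP1) by apply: ler_wpM2l.
  have t2 : a * (a * CP1) <= (e * K) * ((e * K) * CP1).
    apply: ler_pM => //; first by apply: mulr_ge0.
    by apply: ler_wpM2r.
  have t3 : e * bS <= e * (a * CS1) by apply: ler_wpM2l => //; lra.
  have t4 : e * (a * CS1) <= e * ((e * K) * CS1).
    by apply: ler_wpM2l; [lra | apply: ler_wpM2r].
  have -> : e ^+ 2 * Dd = (e * K) * ((e * K) * CP1) + e * ((e * K) * CS1).
    by rewrite /Dd; ring.
  lra.
have := Re_le_nc (lam * P.[0] - e%:C * Sp.[0]).
rewrite P0 S0 ReB ReM_real -rmorphM /= => hre.
rewrite P0 S0 -rmorphM in Hn.
have hx : 0 <= complex.Re lam * p0 by apply: mulr_ge0 => //; lra.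
have := ler_norm (complex.Re lam * p0 - e * r0).
have : e * (e * Dd) < e * (- r0) by rewrite ltr_pM2l.
rewrite expr2 in Hn.
lra.
Qed.


Lemma derive_shift (R : realType) (V V' W : normedModType R) (F : V -> W) (G : V' -> W)
  a b v dv : (forall h : R, F (h *: v + a) = G (h *: dv + b)) ->
  'D_v F a = 'D_dv G b /\ (derivable G b dv -> derivable F a v).
Proof.
move=> H.
have Fa : F a = G b by have := H 0; rewrite !scale0r !add0r.
have E : (fun h : R => h^-1 *: ((F \o shift a) (h *: v) - F a)) =
         (fun h : R => h^-1 *: ((G \o shift b) (h *: dv) - G b)).
  by apply: funext => h /=; rewrite /shift /= H Fa.
by rewrite /derive /derivable E.
Qed.

Lemma derive_quad (R : realType) (V : normedModType R) (F : V -> R) a v (c c2 : R) :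
  (forall h : R, F (h *: v + a) = F a + h * c + h ^+ 2 * c2) ->
  derivable F a v /\ 'D_v F a = c.
Proof.
move=> H.
have C : (fun h : R => c + h * c2) @ 0^' --> c.
  have cont : {for 0, continuous (fun h : R => c + h * c2)}.
    apply: cvgD; first exact: cvg_cst.
    by apply: cvgM; [exact: cvg_id | exact: cvg_cst].
  have := (continuous_withinNx _ _).1 cont.
  by rewrite /= mul0r addr0.
have E : (fun h : R => h^-1 *: ((F \o shift a) (h *: v) - F a)) @ 0^' --> c.
  apply: cvg_trans C; apply: near_eq_cvg; near=> h.
  have hn : h != 0 by near: h; exact: nbhs_dnbhs_neq.
  rewrite /= /shift H; rewrite -[_ *: _]/(_ * _).
  by field.
split; first exact: (cvgP _ E).
exact: cvg_lim E.
Unshelve. all: by end_near.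
Qed.

Lemma shift_coord (R : realType) p q (v a : 'M[R]_(p, q)) (h : R) i k :
  (h *: v + a) i k = a i k + h * v i k.
Proof. by rewrite !mxE addrC. Qed.

Lemma derive_coord (R : realType) p (V : normedModType R) (f : V -> 'rV[R]_p) a v k :
  derivable f a v -> derivable (fun x => f x 0 k) a v /\
  'D_v (fun x => f x 0 k) a = ('D_v f a) 0 k.
Proof.
move=> H; split; first by move/derivable_mxP: H; apply.
by rewrite derive_mx // mxE.
Qed.

Lemma liftx_xs (R : realType) n m (U : 'M[R]_(m.+1, n.+1)) xs :
  liftx U (consM U xs) (lsubmx xs) = xs.
Proof. by rewrite /liftx /consM addrC addKr hsubmxK. Qed.

Lemma liftx_shift (R : realType) n m (U : 'M[R]_(m.+1, n.+1)) M v y (h : R) :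
  liftx U M (h *: v + y) = h *: row_mx v (- (v *m U^T)) + liftx U M y.
Proof.
rewrite /liftx scale_row_mx add_row_mx; congr row_mx.
by rewrite mulmxDl -scalemxAl scalerN opprD addrCA.
Qed.

Lemma Jred_entry (R : realType) n m (f : 'rV[R]_(n.+1 + m.+1) -> 'rV[R]_(n.+1 + m.+1))
    (U : 'M[R]_(m.+1, n.+1)) xs i l :
  differentiable f xs ->
  Jred f U xs i l = ('D_(row_mx (delta_mx 0 l) (- (delta_mx 0 l *m U^T))) f xs) 0 (lshift m.+1 i).
Proof.
move=> df; rewrite /Jred mxE /dpart /gfun.
have [-> _] := @derive_shift _ _ _ _ (fun y => f (liftx U (consM U xs) y) 0 (lshift m.+1 i))
   (fun x => f x 0 (lshift m.+1 i)) (lsubmx xs) xs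
   (delta_mx 0 l) (row_mx (delta_mx 0 l) (- (delta_mx 0 l *m U^T)))
   (fun h => ltac:(by rewrite /= liftx_shift liftx_xs)).
have dv : derivable f xs (row_mx (delta_mx 0 l) (- (delta_mx 0 l *m U^T))) by exact: diff_derivable.
by have [_ ->] := derive_coord (lshift m.+1 i) dv.
Qed.

Definition dl (R : realType) n m (U : 'M[R]_(m.+1, n.+1)) (d : 'rV[R]_(n.+2))
  : 'rV[R]_(n.+1 + m.+1) := row_mx (yof d) (- (yof d *m U^T) - zof d *: u1 U).

Lemma yof_shift (R : realType) n (d w : 'rV[R]_(n.+2)) (h : R) :
  yof (h *: d + w) = h *: yof d + yof w.
Proof. by apply/rowP => j; rewrite !mxE. Qed.

Lemma zof_shift (R : realType) n (d w : 'rV[R]_(n.+2)) (h : R) :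
  zof (h *: d + w) = h * zof d + zof w.
Proof. by rewrite /zof !mxE. Qed.

Lemma liftxz_shift (R : realType) n m (U : 'M[R]_(m.+1, n.+1)) Mb d w (h : R) :
  liftxz U Mb (h *: d + w) = h *: dl U d + liftxz U Mb w.
Proof.
rewrite /liftxz /dl yof_shift zof_shift scale_row_mx add_row_mx; congr row_mx.
rewrite mulmxDl -scalemxAl.
set P1 := yof d *m U^T; set P2 := yof w *m U^T; set u := u1 U.
by apply/rowP => j; rewrite !mxE; ring.
Qed.

Lemma wstar_yof (R : realType) n m (xs : 'rV[R]_(n.+1 + m.+1)) zs :
  yof (wstar xs zs) = lsubmx xs.
Proof.
apply/rowP => j; rewrite !mxE.
have -> : widen_ord (leqnSn n.+1) j = lift ord_max j.
  by apply/val_inj; rewrite /= /bump leqNgt ltn_ord.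
by rewrite liftK.
Qed.

Lemma wstar_zof (R : realType) n m (xs : 'rV[R]_(n.+1 + m.+1)) zs :
  zof (wstar xs zs) = zs.
Proof.
rewrite /zof mxE; case: unliftP => // j /(congr1 val).
rewrite /= /bump leqNgt ltn_ord /= add0n => H.
by have := ltn_ord j; rewrite -H ltnn.
Qed.

Lemma liftxz_star (R : realType) n m (U : 'M[R]_(m.+1, n.+1)) xs zs :
  liftxz U (consMbar U xs zs) (wstar xs zs) = xs.
Proof.
rewrite /liftxz wstar_yof wstar_zof /consMbar /consM.
set P := lsubmx xs *m U^T.
have -> : P + rsubmx xs + zs *: u1 U - P - zs *: u1 U = rsubmx xs.
  by apply/rowP => j; rewrite !mxE; ring.
exact: hsubmxK.
Qed.

Lemma yof_delta_lift (R : realType) n (l : 'I_n.+1) :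
  yof (delta_mx 0 (lift ord_max l) : 'rV[R]_n.+2) = delta_mx 0 l.
Proof.
apply/rowP => j; rewrite !mxE widen_lift_max.
by rewrite (inj_eq (@lift_inj _ ord_max)).
Qed.

Lemma zof_delta_lift (R : realType) n (l : 'I_n.+1) :
  zof (delta_mx 0 (lift ord_max l) : 'rV[R]_n.+2) = 0.
Proof. by rewrite /zof mxE (negbTE (neq_lift _ _)) andbF. Qed.

Lemma yof_delta_max (R : realType) n :
  yof (delta_mx 0 ord_max : 'rV[R]_n.+2) = 0.
Proof.
apply/rowP => j; rewrite !mxE widen_lift_max.
by rewrite eq_sym (negbTE (neq_lift _ _)) andbF.
Qed.

Lemma dl_lift (R : realType) n m (U : 'M[R]_(m.+1, n.+1)) (l : 'I_n.+1) :
  dl U (delta_mx 0 (lift ord_max l)) = row_mx (delta_mx 0 l) (- (delta_mx 0 l *m U^T)).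
Proof. by rewrite /dl yof_delta_lift zof_delta_lift scale0r subr0. Qed.

Lemma F1_deriv (R : realType) n m (f : 'rV[R]_(n.+1 + m.+1) -> 'rV[R]_(n.+1 + m.+1))
    (U : 'M[R]_(m.+1, n.+1)) xs zs d k :
  differentiable f xs ->
  derivable (fun w => f (liftxz U (consMbar U xs zs) w) 0 k) (wstar xs zs) d /\
  'D_d (fun w => f (liftxz U (consMbar U xs zs) w) 0 k) (wstar xs zs) = ('D_(dl U d) f xs) 0 k.
Proof.
move=> df.
have [E1 E2] := @derive_shift _ _ _ _ (fun w => f (liftxz U (consMbar U xs zs) w) 0 k)
   (fun x => f x 0 k) (wstar xs zs) xs d (dl U d)
   (fun h => ltac:(by rewrite /= liftxz_shift liftxz_star)).
have dv : derivable f xs (dl U d) by exact: diff_derivable.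
have [D1 D2] := derive_coord k dv.
by rewrite E1 D2; split => //; apply: E2.
Qed.

Lemma q_deriv (R : realType) n m (xs : 'rV[R]_(n.+1 + m.+1)) zs (theta mu : R) d :
  theta * lsubmx xs 0 ord0 = mu ->
  derivable (fun w : 'rV[R]_n.+2 => zof w * (theta * yof w 0 ord0 - mu)) (wstar xs zs) d /\
  'D_d (fun w : 'rV[R]_n.+2 => zof w * (theta * yof w 0 ord0 - mu)) (wstar xs zs)
    = zs * theta * yof d 0 ord0.
Proof.
move=> Hmu; apply: derive_quad (zof d * theta * yof d 0 ord0) _ => h.
rewrite zof_shift yof_shift !mxE wstar_zof widen_lift_max unliftmaxK.
move: Hmu; rewrite mxE => <-; ring.

Qed.

Lemma hq_deriv (R : realType) n m (f : 'rV[R]_(n.+1 + m.+1) -> 'rV[R]_(n.+1 + m.+1))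
    (U : 'M[R]_(m.+1, n.+1)) (theta mu : R) xs zs (b : R) d k :
  differentiable f xs -> theta * lsubmx xs 0 ord0 = mu ->
  'D_d (fun w : 'rV_n.+2 => f (liftxz U (consMbar U xs zs) w) 0 k -
      b * (zof w * (theta * yof w 0 ord0 - mu))) (wstar xs zs)
  = ('D_(dl U d) f xs) 0 k - b * (zs * theta * yof d 0 ord0).
Proof.
move=> df Hmu.
have [dF1 DF1] := @F1_deriv _ _ _ f U xs zs d k df.
have [dq Dq] := @q_deriv _ n m xs zs theta mu d Hmu.
set F1 := (fun w => f (liftxz U (consMbar U xs zs) w) 0 k) in dF1 DF1.
set q := (fun w : 'rV_n.+2 => zof w * (theta * yof w 0 ord0 - mu)) in dq Dq.
have dG : derivable (b \*o q) (wstar xs zs) d.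
  by apply: derivableM => //; exact: derivable_cst.
have -> : (fun w : 'rV_n.+2 => f (liftxz U (consMbar U xs zs) w) 0 k -
      b * (zof w * (theta * yof w 0 ord0 - mu))) = F1 - (b \*o q).
  by apply: funext => w.
by rewrite deriveB // deriveMl // DF1 Dq.
Qed.

Lemma Jbar_eq (R : realType) n m (f : 'rV[R]_(n.+1 + m.+1) -> 'rV[R]_(n.+1 + m.+1))
    (U : 'M[R]_(m.+1, n.+1)) (theta mu : R) xs zs :
  differentiable f xs -> theta * lsubmx xs 0 ord0 = mu ->
  Jbar f U theta mu xs zs =
  Jb (Jred f U xs) (\col_i ('D_(dl U (delta_mx 0 ord_max)) f xs) 0 (lshift m.+1 i)) (zs * theta).
Proof.
move=> df Hmu.
apply/matrixP => i l; rewrite /Jbar /Jb !mxE /dpart.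
case: (unliftP ord_max i) => [i' ->|->]; case: (unliftP ord_max l) => [l' ->|->];
  rewrite ?unliftmaxK ?unliftmaxN /hfun ?unliftmaxK ?unliftmaxN.
- rewrite hq_deriv // dl_lift Jred_entry // yof_delta_lift !mxE eqxx /= !(eq_sym ord0).
  by case: (i' == ord0); case: (l' == ord0) => /=; ring.
- by rewrite hq_deriv // yof_delta_max !mxE mulr0 mulr0 subr0.
- have [_ ->] := @q_deriv _ n m xs zs theta mu (delta_mx 0 (lift ord_max l')) Hmu.
  by rewrite yof_delta_lift !mxE eqxx /= !(eq_sym ord0); ring.
- have [_ ->] := @q_deriv _ n m xs zs theta mu (delta_mx 0 ord_max) Hmu.
  by rewrite yof_delta_max mxE mulr0.
Qed.

Theorem mainTheorem3 (R : realType) (n m : nat)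
    (f : 'rV[R]_(n.+1 + m.+1) -> 'rV[R]_(n.+1 + m.+1))
    (U : 'M[R]_(m.+1, n.+1)) (xs : 'rV[R]_(n.+1 + m.+1)) :
  (* f is the (smooth enough) vector field: differentiable at xstar *)
  differentiable f xs ->
  (* xstar is a positive steady state *)
  (forall i, 0 < xs 0 i) ->
  f xs = 0 ->
  (* (1) conservation relations [U | I] x = M, u^i nonnegative, u^1_1 <> 0 *)
  (forall x : 'rV[R]_(n.+1 + m.+1), (forall i, 0 < x 0 i) ->
     lsubmx (f x) *m U^T + rsubmx (f x) = 0) ->
  (forall j i, 0 <= U j i) ->
  U 0 0 != 0 ->
  (* (2) J(xstar) is Hurwitz *)
  all_eig_neg_re (Jred f U xs) ->
  (* conclusion *)
  forall zs : R, 0 < zs ->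
  exists theta0 : R, 0 < theta0 /\
    forall theta mu : R, 0 < theta -> theta < theta0 -> 0 < mu ->
      xs 0 (lshift m.+1 ord0) = mu / theta ->
      (* (3) sign condition on H_2(0) *)
      (if odd n.+1 then 0 < H2at0 f U theta mu xs zs
       else H2at0 f U theta mu xs zs < 0) ->
      all_eig_neg_re (Jbar f U theta mu xs zs).
Proof.
move=> df _ _ _ _ _ HJ zs zspos.
have [e0 [e0pos He]] := core (\col_i ('D_(dl U (delta_mx 0 ord_max)) f xs) 0 (lshift m.+1 i)) HJ.
exists (e0 / zs); split; first exact: divr_gt0.
move=> theta mu thpos thlt mupos Hx Hsign.
have Hmu : theta * lsubmx xs 0 ord0 = mu.
  by rewrite mxE Hx; field; rewrite gt_eqF.
rewrite /H2at0 (Jbar_eq U zs df Hmu) in Hsign.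
rewrite /all_eig_neg_re (Jbar_eq U zs df Hmu).
apply: He => //; first exact: mulr_gt0.
by rewrite mulrC -ltr_pdivlMr.
Qed.
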